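(* Let $C\colon y^2=f(x)$ be a hyperelliptic curve over $K$ with $f(x)\in\mathcal O_K[x]$. If $d_{\mathcal R}=0$, $v(c_f)=0$ and there is no cluster $\mathfrak s\neq\mathcal R$ with $|\mathfrak s|>g+1$, then $y^2=f(x)$ is a minimal Weierstrass equation for $C$.
   Context: $K$ is a non-archimedean local field with ring of integers $\mathcal O_K$, finite residue field of characteristic $p\ne2$, valuation $v$ on $\bar K$ normalised on $K$. $f$ is separable of degree $2g+1$ or $2g+2$, $g\ge2$ the genus, with leading coefficient $c_f$ and roots $\mathcal R$. Clusters: non-empty $D\cap\mathcal R$ for discs $D=\{x\in\bar K:v(x-z)\ge d\}$; $d_{\mathcal R}=\min_{r,r'\in\mathcal R}v(r-r')$. The discriminant of $y^2=h(x)$ is $16^gc_h^{4g+2}\mathrm{disc}(h/c_h)$; an integral Weierstrass equation for $C$ is a $K$-isomorphic model $y^2=h(x)$, $h\in\mathcal O_K[x]$, and it is minimal if its discriminant has minimal valuation among all integral Weierstrass equations for $C$. *)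

(* Defs.v *)
From HB Require Import structures.
From mathcomp Require Import all_boot all_order all_algebra.
From mathcomp Require Import separable.
Set Implicit Arguments. Unset Strict Implicit. Unset Printing Implicit Defensive.
Import Order.TTheory GRing.Theory Num.Theory.
Local Open Scope ring_scope.

(* Setting: K a field, L an algebraically closed field with an embedding
   iota : K -> L (playing the role of \bar K; only the algebraic closure of
   iota(K) inside L ever matters), and v : L -> rat a valuation on L
   (its value at 0 is irrelevant: all axioms and uses concern nonzero
   arguments, v(0) = +oo by convention). *)

Section Defs.
Variables (K : fieldType) (L : closedFieldType) (iota : {rmorphism K -> L}).
Variable (v : L -> rat).

Definition vK (a : K) : rat := v (iota a).

Definition is_valuation : Prop :=
  (forall x y : L, x != 0 -> y != 0 -> v (x * y) = v x + v y) /\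
  (forall x y : L, x != 0 -> y != 0 -> x + y != 0 ->
      Num.min (v x) (v y) <= v (x + y)).

Definition intK (a : K) : bool := (a == 0) || (0 <= vK a).

Definition vK_cauchy (u : nat -> K) : Prop :=
  forall N : int, exists n0 : nat, forall m n : nat, (n0 <= m)%N -> (n0 <= n)%N ->
    u m = u n \/ N%:~R <= vK (u m - u n).
Definition vK_converges (u : nat -> K) (l : K) : Prop :=
  forall N : int, exists n0 : nat, forall n : nat, (n0 <= n)%N ->
    u n = l \/ N%:~R <= vK (u n - l).

(* K is a non-archimedean local field with valuation v normalised on K
   (discrete, with value group exactly Z), complete, with finite residue
   field O_K / m_K of characteristic different from 2; v on L extends it
   (the extension to the algebraic closure is then the unique one). *)
Definition nonarch_local_field_odd_residue : Prop :=
  is_valuation /\ [/\ 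
      (forall a : K, a != 0 -> vK a \is a Num.int),
      (exists pi : K, pi != 0 /\ vK pi = 1),
      (forall u : nat -> K, vK_cauchy u -> exists l, vK_converges u l),
      (exists s : seq K, all intK s /\
          (forall a : K, intK a ->
            exists b, b \in s /\ ((a - b == 0) || (0 < vK (a - b))))) &
      ((2 : K) != 0 /\ vK 2 = 0) ].

Definition intK_poly (h : {poly K}) : Prop := forall i : nat, intK h`_i.

Definition roots_of (h : {poly K}) (rs : seq L) : Prop :=
  map_poly iota h = (iota (lead_coef h)) *: \prod_(r <- rs) ('X - r%:P).

Definition weq_disc (g : nat) (h : {poly K}) (rs : seq L) : L :=
  iota ((16 : K) ^+ g * (lead_coef h) ^+ (4 * g + 2)) *
  \prod_(i < size rs) \prod_(j < size rs | (i < j)%N) (rs`_i - rs`_j) ^+ 2.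

Definition in_disc (z : L) (d : rat) (x : L) : bool := (x == z) || (d <= v (x - z)).

Definition disc_cluster (rs : seq L) (z : L) (d : rat) : seq L :=
  [seq r <- rs | in_disc z d r].

Definition depth_R_eq (rs : seq L) (dR : rat) : Prop :=
  (exists r r', [/\ r \in rs, r' \in rs, r != r' & v (r - r') = dR]) /\
  (forall r r', r \in rs -> r' \in rs -> r != r' -> dR <= v (r - r')).

(* the model y^2 = e^2 (cx+d)^(2g+2) f((ax+b)/(cx+d)) *)
Definition weq_transform (g : nat) (f : {poly K}) (a b c d e : K) : {poly K} :=
  (e ^+ 2) *: \sum_(i < (2 * g + 3)%N)
     f`_i *: (('X * a%:P + b%:P) ^+ i * ('X * c%:P + d%:P) ^+ (2 * g + 2 - i)).

(* y^2 = h(x) is an integral Weierstrass equation for C : y^2 = f(x):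
   h in O_K[x] and h is K-isomorphic to C via
   (x, y) |-> ((ax+b)/(cx+d), e y/(cx+d)^(g+1)), ad - bc != 0, e != 0 *)
Definition integral_weq_for (g : nat) (f h : {poly K}) : Prop :=
  intK_poly h /\
  exists a b c d e : K, [/\ a * d - b * c != 0, e != 0 &
                          h = weq_transform g f a b c d e].

Definition minimal_weq (g : nat) (f : {poly K}) : Prop :=
  intK_poly f /\
  forall (h : {poly K}) (rf rh : seq L),
    integral_weq_for g f h -> roots_of f rf -> roots_of h rh ->
    v (weq_disc g f rf) <= v (weq_disc g h rh).

End Defs.

(* Main.v *)
Require Import Defs.
From HB Require Import structures.
From mathcomp Require Import all_boot all_order all_algebra.
From mathcomp Require Import separable.
From mathcomp Require Import ring lra zify.
Require Import Defs.
Import Order.TTheory GRing.Theory Num.Theory.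
Set Implicit Arguments. Unset Strict Implicit. Unset Printing Implicit Defensive.
Local Open Scope ring_scope.
Section BD.
Variable L : fieldType.

Definition det2 (x y : L * L) : L := x.1 * y.2 - y.1 * x.2.

Fixpoint BD (s : seq (L * L)) : L :=
  if s is x :: s' then (\prod_(y <- s') det2 x y ^+ 2) * BD s' else 1.

Lemma det2C x y : det2 y x ^+ 2 = det2 x y ^+ 2.
Proof. rewrite /det2; ring. Qed.

Lemma prod_const_seq (I : Type) (s : seq I) (c : L) : \prod_(y <- s) c = c ^+ size s.
Proof. by elim: s => [|a s IH]; rewrite ?big_nil ?big_cons ?IH ?exprS. Qed.

Lemma BD_mid s1 x s2 :
  BD (s1 ++ x :: s2) = (\prod_(y <- s1 ++ s2) det2 x y ^+ 2) * BD (s1 ++ s2).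
Proof.
elim: s1 => [|a s1 IH] //=.
rewrite IH !big_cat !big_cons /= det2C big_cat /=.
ring.
Qed.

Lemma BD_perm s t : perm_eq s t -> BD s = BD t.
Proof.
elim: s t => [|x s IH] t.
  by move=> /perm_size /esym /size0nil ->.
move=> pst; have xt : x \in t by rewrite -(perm_mem pst) inE eqxx.
case/splitPr: xt pst => t1 t2 pst.
have pst' : perm_eq s (t1 ++ t2).
  by rewrite -(perm_cons x); apply: (perm_trans pst); rewrite -cat1s perm_catCA.
rewrite BD_mid /= (IH _ pst').
by rewrite (perm_big _ pst').
Qed.

Lemma BD_scale (t : L * L -> L) s :
  BD (map (fun x => (t x * x.1, t x * x.2)) s) =
  (\prod_(x <- s) t x) ^+ (2 * (size s).-1) * BD s.
Proof.
elim: s => [|x s IH] /=; first by rewrite big_nil expr1n mul1r.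
rewrite IH big_map big_cons.
have -> : \prod_(y <- s) det2 (t x * x.1, t x * x.2) (t y * y.1, t y * y.2) ^+ 2
   = (t x ^+ (2 * size s)) * (\prod_(y <- s) t y) ^+ 2 * \prod_(y <- s) det2 x y ^+ 2.
  rewrite -prodrXl exprM -prod_const_seq -!big_split /=.
  apply: eq_bigr => y _; rewrite /det2 /=.
  ring.
case: s {IH} => [|y s] /=.
  by rewrite !big_nil !expr1n expr0 ?mul1r ?mulr1.
set P := \prod_(_ <- _) t _; set Q := \prod_(_ <- _) _ ^+ 2.
rewrite !exprMn.
have -> : (2 * (size s).+1 = 2 + 2 * size s)%N by lia.
rewrite !exprD; ring.
Qed.

Definition Nact (a b c d : L) (x : L * L) := (a * x.1 + c * x.2, b * x.1 + d * x.2).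

Lemma BD_Nact a b c d s :
  BD (map (Nact a b c d) s) = (a * d - b * c) ^+ (size s * (size s).-1) * BD s.
Proof.
elim: s => [|x s IH] /=; first by rewrite expr0 mul1r.
rewrite IH big_map.
have -> : \prod_(y <- s) det2 (Nact a b c d x) (Nact a b c d y) ^+ 2
   = (a * d - b * c) ^+ (2 * size s) * \prod_(y <- s) det2 x y ^+ 2.
  rewrite exprM -prod_const_seq -big_split /=.
  by apply: eq_bigr => y _; rewrite /det2 /Nact /=; ring.
set Q := \prod_(_ <- _) _ ^+ 2.
have -> : ((size s).+1 * size s = 2 * size s + size s * (size s).-1)%N.
  by case: (size s) => [|n] //=; lia.
rewrite exprD; ring.
Qed.

Lemma BD_neq0 s : pairwise (fun x y => det2 x y != 0) s -> BD s != 0.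
Proof.
elim: s => [|x s IH] /=; first by rewrite oner_eq0.
case/andP => /allP hx hs; rewrite mulf_neq0 ?IH //.
by rewrite prodf_seq_neq0; apply/allP => y /hx hy; rewrite expf_neq0.
Qed.

Lemma Dr_BD (s : seq L) :
  \prod_(i < size s) \prod_(j < size s | (i < j)%N) (s`_i - s`_j) ^+ 2 =
  BD (map (fun r => (1, - r)) s).
Proof.
elim: s => [|x s IH] /=; first by rewrite big_ord0.
rewrite big_ord_recl /= -IH; congr (_ * _).
  rewrite big_mkcond big_ord_recl /= mul1r big_map.
  rewrite (big_nth 0) big_mkord; apply: eq_bigr => j _.
  by rewrite /det2 /= !mul1r opprK addrC.
apply: eq_bigr => i _.
rewrite big_mkcond big_ord_recl /= mul1r [in RHS]big_mkcond.
by apply: eq_bigr => j _.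
Qed.

End BD.

Section Hom.
Variable L : fieldType.

Definition hom (N : nat) (p A B : {poly L}) : {poly L} :=
  \sum_(i < N.+1) p`_i *: (A ^+ i * B ^+ (N - i)).

Lemma hom_mulX N (r : L) (p A B : {poly L}) : (size p <= N.+1)%N ->
  hom N.+1 (('X - r%:P) * p) A B = (A - r *: B) * hom N p A B.
Proof.
move=> sp; rewrite /hom.
have -> : \sum_(i < N.+2) (('X - r%:P) * p)`_i *: (A ^+ i * B ^+ (N.+1 - i))
  = \sum_(i < N.+2) ('X * p)`_i *: (A ^+ i * B ^+ (N.+1 - i))
    - r *: \sum_(i < N.+2) p`_i *: (A ^+ i * B ^+ (N.+1 - i)).
  rewrite scaler_sumr -sumrB; apply: eq_bigr => i _.
  by rewrite mulrBl coefB coefCM scalerBl scalerA.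
rewrite big_ord_recl coefXM /= scale0r add0r.
rewrite [X in _ - r *: X]big_ord_recr /= (nth_default 0 sp) scale0r addr0.
rewrite mulrBl; congr (_ - _).
  rewrite mulr_sumr; apply: eq_bigr => i _.
  by rewrite coefXM /bump /= add1n subSS -scalerAr exprS mulrA.
rewrite -scalerAl mulr_sumr; congr (_ *: _); apply: eq_bigr => i _.
rewrite -scalerAr; congr (_ *: _).
have -> : (N.+1 - i = (N - i).+1)%N by have := ltn_ord i; lia.
by rewrite exprS mulrCA.
Qed.

Lemma hom_C N (c : L) (A B : {poly L}) : hom N c%:P A B = c *: B ^+ N.
Proof.
rewrite /hom big_ord_recl coefC /= expr0 mul1r subn0 big1 ?addr0 // => i _.
by rewrite coefC /= scale0r.
Qed.

Lemma hom_prod (rs : seq L) k (c : L) (A B : {poly L}) :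
  hom (size rs + k) (c *: \prod_(r <- rs) ('X - r%:P)) A B =
  c *: ((\prod_(r <- rs) (A - r *: B)) * B ^+ k).
Proof.
elim: rs => [|r rs IH] /=.
  by rewrite !big_nil add0n alg_polyC hom_C mul1r.
rewrite !big_cons addSn scalerAr hom_mulX; last first.
  by rewrite (leq_trans (size_scale_leq _ _)) // size_prod_XsubC ltnS leq_addr.
by rewrite IH -scalerAr mulrA.
Qed.

Definition lin (x : L * L) : {poly L} := 'X * x.1%:P + x.2%:P.

Definition nz (x : L * L) := (x.1 != 0) || (x.2 != 0).

Lemma prod_scale (I : Type) (s : seq I) (c : I -> L) (p : I -> {poly L}) :
  \prod_(i <- s) (c i *: p i) = (\prod_(i <- s) c i) *: \prod_(i <- s) p i.
Proof.
elim: s => [|a s IH]; first by rewrite !big_nil scale1r.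
by rewrite !big_cons IH -scalerAl -scalerAr scalerA.
Qed.

Lemma lin_fin (x : L * L) : x.1 != 0 -> lin x = x.1 *: ('X - (- (x.2 / x.1))%:P).
Proof.
move=> p0; rewrite /lin -mul_polyC polyCN opprK mulrDr -polyCM mulrCA mulfV // mulr1.
by rewrite mulrC.
Qed.

Lemma lin_zero (x : L * L) : x.1 = 0 -> lin x = x.2 *: 1.
Proof. by move=> p0; rewrite /lin p0 mulr0 add0r alg_polyC. Qed.

Lemma GL (hL : {poly L}) (cL lam : L) (rh : seq L) (P : seq (L * L)) :
  hL = cL *: \prod_(s <- rh) ('X - s%:P) ->
  hL = lam *: \prod_(x <- P) lin x ->
  lam != 0 -> all nz P -> BD P != 0 -> (2 <= size P)%N ->
  cL ^+ (2 * (size P).-1) * BD (map (fun s => (1, - s)) rh) =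
  lam ^+ (2 * (size P).-1) * BD P.
Proof.
move=> h1 h2 l0 hnz hBD hsz.
set Pz := [seq x <- P | x.1 == 0]; set Pf := [seq x <- P | predC (fun x : L * L => x.1 == 0) x].
have pP : perm_eq (Pz ++ Pf) P by rewrite perm_filterC.
have hPf : forall x, x \in Pf -> x.1 != 0 by move=> x; rewrite mem_filter => /andP[].
have hPz : forall x, x \in Pz -> x.1 = 0 /\ x.2 != 0.
  move=> x; rewrite mem_filter => /andP[/eqP e xP]; split => //.
  by move/allP: hnz => /(_ _ xP); rewrite /nz e eqxx.
set Pi := \prod_(x <- Pf) x.1.
set Qz := \prod_(x <- Pz) x.2.
have Pi0 : Pi != 0 by rewrite prodf_seq_neq0; apply/allP => x /hPf.
have Qz0 : Qz != 0 by rewrite prodf_seq_neq0; apply/allP => x /hPz [].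
set T := map (fun x : L * L => - (x.2 / x.1)) Pf.
have eprod : \prod_(x <- P) lin x = (Qz * Pi) *: \prod_(t <- T) ('X - t%:P).
  rewrite -(perm_big _ pP) big_cat /=.
  rewrite (eq_big_seq (fun x => x.2 *: 1)); last by move=> x /hPz [] /lin_zero.
  rewrite [X in _ * X](eq_big_seq (fun x : L * L => x.1 *: ('X - (- (x.2 / x.1))%:P))); last first.
    by move=> x /hPf /lin_fin.
  rewrite !prod_scale big_map -/Qz -/Pi.
  rewrite -scalerAl -scalerAr scalerA.
  have -> : \prod_(i <- Pz) (1 : {poly L}) = 1 by rewrite big1.
  by rewrite mul1r.
have ecL : cL = lam * (Qz * Pi).
  have := congr1 lead_coef h1; rewrite {1}h2 eprod scalerA !lead_coefZ.
  by rewrite !lead_coef_prod_XsubC !mulr1.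
have hperm : perm_eq rh T.
  apply: prod_XsubC_eq; apply: (@scalerI _ _ cL).
    by rewrite ecL !mulf_neq0.
  by rewrite -h1 h2 eprod scalerA ecL.
have eBD : BD (map (fun s => (1, - s)) rh) = (Pi ^-1) ^+ (2 * (size Pf).-1) * BD Pf.
  rewrite (BD_perm (perm_map _ hperm)) -map_comp.
  rewrite -prodfV -/Pi -(BD_scale (fun x => x.1^-1)) /=.
  congr BD; apply/eq_in_map => x /hPf p0 /=.
  by rewrite mulVf // opprK mulrC.
have ePBD : BD P = BD (Pz ++ Pf) by rewrite (BD_perm pP).
have szP : size P = (size Pz + size Pf)%N by rewrite -(perm_size pP) size_cat.
rewrite eBD ePBD szP ecL.
case hz : Pz hPz Qz0 ePBD szP => [|y [|y' Pz']] hPz' Qz0' ePBD' szP' /=.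
- have Qz1 : Qz = 1 by rewrite /Qz hz big_nil.
  rewrite Qz1 mul1r add0n exprMn -mulrA [Pi ^+ _ * _]mulrA -exprMn mulfV //.
  by rewrite expr1n mul1r.
- have Qzy : Qz = y.2 by rewrite /Qz hz big_cons big_nil mulr1.
  have [y1 y20] := hPz' y (mem_head _ _).
  have -> : \prod_(y0 <- Pf) det2 y y0 ^+ 2 = (Pi * y.2 ^+ size Pf) ^+ 2.
    rewrite -prod_const_seq -big_split -prodrXl; apply: eq_bigr => z _.
    by rewrite /det2 y1 /=; ring.
  move: szP' hsz; rewrite Qzy add0n.
  case: (size Pf) => [|m] /= szP2 hsz2; first by move: hsz2; rewrite szP2.
  rewrite !exprMn exprVn -!exprM (mulnC m.+1 2) mulnS !exprD.
  have hA : Pi ^+ (2 * m) != 0 by rewrite expf_neq0.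
  field.
  by rewrite expf_neq0.
- exfalso; move: hBD; rewrite ePBD' /= big_cons.
  have [y1 _] := hPz' y (mem_head _ _).
  have [y'1 _] : y'.1 = 0 /\ y'.2 != 0 by apply: hPz'; rewrite !inE eqxx orbT.
  by rewrite /det2 y1 y'1 !mul0r subr0 expr0n /= !mul0r eqxx.
Qed.

End Hom.
Arguments nz {L} x.
Arguments lin {L} x.

Section Comb.
Variable T : eqType.

Lemma argmax_seq (s : seq T) (F : T -> rat) : s != [::] ->
  exists2 x0, x0 \in s & forall y, y \in s -> F y <= F x0.
Proof.
elim: s => [|a s IH] // _.
case: (eqVneq s [::]) => [->|sn].
  by exists a; rewrite ?inE ?eqxx // => y; rewrite inE => /eqP ->.
case: (IH sn) => x0 hx0 hmax.
case: (leP (F a) (F x0)) => h.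
  exists x0; first by rewrite inE hx0 orbT.
  by move=> y; rewrite inE => /orP[/eqP ->|/hmax].
exists a; first by rewrite inE eqxx.
move=> y; rewrite inE => /orP[/eqP ->//|/hmax hy].
exact: le_trans hy (ltW h).
Qed.

Lemma sum_if (s : seq T) (C : pred T) (a b : rat) :
  \sum_(y <- s) (if C y then a else b) =
  (count C s)%:R * a + (count (predC C) s)%:R * b.
Proof.
elim: s => [|y s IH]; first by rewrite big_nil !mul0r addr0.
rewrite big_cons IH /=; case: (C y) => /=; rewrite ?add0n ?add1n -addn1 natrD; lra.
Qed.

Lemma sum_le_seq (s : seq T) (F G : T -> rat) :
  (forall y, y \in s -> F y <= G y) -> \sum_(y <- s) F y <= \sum_(y <- s) G y.
Proof.
elim: s => [|y s IH] h; first by rewrite !big_nil.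
rewrite !big_cons lerD ?h ?inE ?eqxx //.
by apply: IH => z hz; apply: h; rewrite inE hz orbT.
Qed.

Lemma sum_bound (P0 : seq T) (F : T -> rat) (V : rat) (g : nat) (C : T -> pred T) :
  size P0 = (2 * g + 2)%N ->
  (forall x0, x0 \in P0 -> (count (C x0) P0 <= g + 1)%N /\
      forall y, y \in P0 -> ~~ C x0 y -> F x0 + F y <= V) ->
  \sum_(x <- P0) F x <= (g + 1)%:R * V.
Proof.
move=> hs hC.
have ne : P0 != [::] by apply/eqP => e; move: hs; rewrite e /=; lia.
case: (argmax_seq F ne) => x0 hx0 hmax.
case: (hC x0 hx0) => hc hv.
set M := F x0.
have hcnt := count_predC (C x0) P0; rewrite hs in hcnt.
have hle : \sum_(y <- P0) F y <= \sum_(y <- P0) (if C x0 y then M else V - M).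
  apply: sum_le_seq => y hy; case: ifP => hcy; first exact: hmax.
  have := hv y hy (negbT hcy); rewrite /M; lra.
rewrite sum_if in hle.
have : ((count (C x0) P0)%:R + (count (predC (C x0)) P0)%:R = (2 * g + 2)%:R :> rat).
  by rewrite -natrD hcnt.
have : ((count (C x0) P0)%:R <= (g + 1)%:R :> rat) by rewrite ler_nat.
rewrite !natrD.
set c := (count (C x0) P0)%:R; set c' := (count (predC (C x0)) P0)%:R.
have c0 : 0 <= c by rewrite /c ler0n.
have c'0 : 0 <= c' by rewrite /c' ler0n.
move: hle; rewrite -/c -/c'; set G := (g%:R : rat).
move=> hle h1 h2.
case: (leP (2 * M) V) => hM.
  have hle2 : \sum_(y <- P0) F y <= \sum_(y <- P0) M by apply: sum_le_seq.
  move: hle2; rewrite big_const_seq count_predT hs.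
  have -> : forall n, iter n (+%R M) 0 = n%:R * M.
    by elim=> [|n IH] /=; rewrite ?mul0r // IH -addn1 natrD; lra.
  rewrite natrD natrM /= -/G => h3.
  have hh : 0 <= (G + 1) * (V - 2 * M) by apply: mulr_ge0; lra.
  lra.
have ec' : c' = G + (G + 0) + 2 - c by lra.
rewrite ec' in hle.
have hh : 0 <= (G + 1 - c) * (2 * M - V) by apply: mulr_ge0; lra.
lra.
Qed.

End Comb.

Section Val.
Variable (L : fieldType) (v : L -> rat).
Hypothesis vM : forall {x y : L}, x != 0 -> y != 0 -> v (x * y) = v x + v y.
Hypothesis vA : forall {x y : L}, x != 0 -> y != 0 -> x + y != 0 ->
      Num.min (v x) (v y) <= v (x + y).

Definition ge (x : L) (m : rat) := (x == 0) || (m <= v x).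
Definition gt (x : L) (m : rat) := (x == 0) || (m < v x).

Lemma v1 : v 1 = 0.
Proof. have := vM (oner_neq0 L) (oner_neq0 L); rewrite mulr1 => h; lra. Qed.

Lemma vN1 : v (-1) = 0.
Proof.
have n1 : (-1 : L) != 0 by rewrite oppr_eq0 oner_eq0.
have := vM n1 n1; rewrite mulrNN mulr1 v1 => h; lra.
Qed.

Lemma vN x : v (- x) = v x.
Proof.
have [->|x0] := eqVneq x 0; first by rewrite oppr0.
have n1 : (-1 : L) != 0 by rewrite oppr_eq0 oner_eq0.
by rewrite -mulN1r vM // vN1 add0r.
Qed.

Lemma vX x n : x != 0 -> v (x ^+ n) = n%:R * v x.
Proof.
move=> x0; elim: n => [|n IH]; first by rewrite expr0 v1 mul0r.
by rewrite exprS vM ?expf_neq0 // IH -addn1 natrD; lra.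
Qed.

Lemma vV x : x != 0 -> v (x^-1) = - v x.
Proof.
move=> x0; have := vM x0 (invr_neq0 x0); rewrite mulfV // v1 => h; lra.
Qed.

Lemma vprod (I : eqType) (s : seq I) (F : I -> L) :
  (forall i, i \in s -> F i != 0) -> v (\prod_(i <- s) F i) = \sum_(i <- s) v (F i).
Proof.
elim: s => [|a s IH] H; first by rewrite !big_nil v1.
rewrite !big_cons vM ?IH //.
- by move=> i hi; apply: H; rewrite inE hi orbT.
- by apply: H; rewrite inE eqxx.
- by rewrite prodf_seq_neq0; apply/allP => i hi; apply: H; rewrite inE hi orbT.
Qed.

Lemma ge_add x y m : ge x m -> ge y m -> ge (x + y) m.
Proof.
rewrite /ge; have [->|x0] := eqVneq x 0; first by rewrite add0r => ? ?.
have [->|y0] := eqVneq y 0; first by rewrite addr0 (negPf x0) => ? ?.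
have [e|s0] := eqVneq (x + y) 0; first by move=> _ _.
move=> /= hx hy.
by apply: le_trans (vA x0 y0 s0); rewrite le_min hx hy.
Qed.

Lemma gt_add x y m : gt x m -> gt y m -> gt (x + y) m.
Proof.
rewrite /gt; have [->|x0] := eqVneq x 0; first by rewrite add0r => ? ?.
have [->|y0] := eqVneq y 0; first by rewrite addr0 (negPf x0) => ? ?.
have [e|s0] := eqVneq (x + y) 0; first by move=> _ _.
move=> /= hx hy.
by apply: lt_le_trans (vA x0 y0 s0); rewrite lt_min hx hy.
Qed.

Lemma ge_mul x y m n : ge x m -> ge y n -> ge (x * y) (m + n).
Proof.
rewrite /ge; have [->|x0] := eqVneq x 0; first by rewrite mul0r eqxx.
have [->|y0] := eqVneq y 0; first by rewrite mulr0 eqxx.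
rewrite mulf_eq0 (negPf x0) (negPf y0) /= vM // => hx hy; lra.
Qed.

Lemma gt_mul x y m n : gt x m -> ge y n -> gt (x * y) (m + n).
Proof.
rewrite /ge /gt; have [->|x0] := eqVneq x 0; first by rewrite mul0r eqxx.
have [->|y0] := eqVneq y 0; first by rewrite mulr0 eqxx.
rewrite mulf_eq0 (negPf x0) (negPf y0) /= vM // => hx hy; lra.
Qed.

Lemma ge_le x m n : ge x m -> n <= m -> ge x n.
Proof. by rewrite /ge => /orP[->//|h] hn; rewrite (le_trans hn h) orbT. Qed.

Lemma gt_ge x m : gt x m -> ge x m.
Proof. by rewrite /ge /gt => /orP[->//|h]; rewrite ltW ?orbT. Qed.

Lemma ge_N x m : ge (- x) m = ge x m.
Proof. by rewrite /ge oppr_eq0 vN. Qed.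

Lemma gt_N x m : gt (- x) m = gt x m.
Proof. by rewrite /gt oppr_eq0 vN. Qed.

Lemma ge_sum (I : eqType) (s : seq I) (F : I -> L) m :
  (forall i, i \in s -> ge (F i) m) -> ge (\sum_(i <- s) F i) m.
Proof.
elim: s => [|a s IH] H; first by rewrite big_nil /ge eqxx.
rewrite big_cons; apply: ge_add; first by apply: H; rewrite inE eqxx.
by apply: IH => i hi; apply: H; rewrite inE hi orbT.
Qed.

Lemma gt_sum (I : eqType) (s : seq I) (F : I -> L) m :
  (forall i, i \in s -> gt (F i) m) -> gt (\sum_(i <- s) F i) m.
Proof.
elim: s => [|a s IH] H; first by rewrite big_nil /gt eqxx.
rewrite big_cons; apply: gt_add; first by apply: H; rewrite inE eqxx.
by apply: IH => i hi; apply: H; rewrite inE hi orbT.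
Qed.

Lemma strict_add x y : x != 0 -> gt y (v x) -> (x + y != 0) && (v (x + y) == v x).
Proof.
move=> x0; rewrite /gt; have [->|y0] /= := eqVneq y 0; first by rewrite addr0 x0 eqxx.
move=> hy; have s0 : x + y != 0.
  apply/eqP => e; move: hy; have -> : y = - x by apply/eqP; rewrite -addr_eq0 addrC; apply/eqP.
  by rewrite vN ltxx.
rewrite s0 /= eq_le; apply/andP; split; last first.
  by apply: le_trans (vA x0 y0 s0); rewrite le_min lexx (ltW hy).
rewrite leNgt; apply/negP => hs.
have ny0 : - y != 0 by rewrite oppr_eq0.
have e : x = (x + y) + - y by rewrite addrK.
have := vA s0 ny0; rewrite -e => /(_ x0); rewrite vN.
by rewrite ge_min !leNgt hs hy.
Qed.

Lemma v_ge x m : x != 0 -> ge x m -> m <= v x.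
Proof. by rewrite /ge => /negPf ->. Qed.



Definition mu (x : L * L) : rat :=
  if x.1 == 0 then v x.2 else if x.2 == 0 then v x.1 else Num.min (v x.1) (v x.2).


Lemma ge_mu1 x : ge x.1 (mu x).
Proof.
rewrite /mu /ge; case: (x.1 == 0) => //=.
by case: (x.2 == 0) => //=; rewrite ge_min lexx.
Qed.

Lemma ge_mu2 x : ge x.2 (mu x).
Proof.
rewrite /mu /ge; case: (x.1 == 0) => /=; first by rewrite lexx orbT.
by case: eqP => [//|_] /=; rewrite ge_min lexx orbT.
Qed.

Lemma mu_cases x : nz x ->
  (x.2 != 0 /\ v x.2 = mu x) \/ (x.1 != 0 /\ v x.1 = mu x /\ gt x.2 (mu x)).
Proof.
rewrite /nz /mu; case: eqP => [_|/eqP p0] /=; first by left.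
case: eqP => [->|/eqP q0] _; first by right; rewrite /gt eqxx.
case: (ltP (v x.1) (v x.2)) => h.
  by right; rewrite /gt (negPf q0) /= h.
by left.
Qed.

Lemma coef_lin x (Q : {poly L}) k :
  (lin x * Q)`_k = (if k == 0%N then 0 else x.1 * Q`_k.-1) + x.2 * Q`_k.
Proof.
rewrite /lin mulrDl coefD -mulrA coefXM coefCM; congr (_ + _).
by case: (k == 0%N) => //; rewrite coefCM.
Qed.

Definition ginv (Q : {poly L}) (M : rat) :=
  (forall k, ge Q`_k M) /\
  exists k0, [/\ Q`_k0 != 0, v Q`_k0 = M & forall k, (k < k0)%N -> gt Q`_k M].

Lemma ginv_step x Q M : nz x -> ginv Q M -> ginv (lin x * Q) (mu x + M).
Proof.
move=> nzx [hall [k0 [hk0 hv hlt]]]; split.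
  move=> k; rewrite coef_lin; apply: ge_add.
    case: eqP => _; first by rewrite /ge eqxx.
    by apply: ge_mul; [apply: ge_mu1 | apply: hall].
  by apply: ge_mul; [apply: ge_mu2 | apply: hall].
case: (mu_cases nzx) => [[q0 hq] | [p0 [hp hq]]].
- have vv : v (x.2 * Q`_k0) = mu x + M by rewrite vM // hq hv.
  have hh : gt (if k0 == 0%N then 0 else x.1 * Q`_k0.-1) (mu x + M).
    case: eqP => [_|/eqP k00]; first by rewrite /gt eqxx.
    rewrite mulrC addrC; apply: gt_mul (ge_mu1 x); apply: hlt.
    by case: (k0) k00.
  have := strict_add (mulf_neq0 q0 hk0) (eq_ind_r (fun t => gt _ t) hh vv).
  case/andP => h1 /eqP h2.
  exists k0; split.
  + by rewrite coef_lin addrC.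
  + by rewrite coef_lin addrC h2.
  + move=> k hk; rewrite coef_lin; apply: gt_add.
      case: eqP => _; first by rewrite /gt eqxx.
      rewrite mulrC addrC; apply: gt_mul (ge_mu1 x); apply: hlt.
      by case: (k) hk => //= n hn; apply: ltnW.
    by rewrite mulrC addrC; apply: gt_mul (hlt _ hk) (ge_mu2 x).
- have vv : v (x.1 * Q`_k0) = mu x + M by rewrite vM // hp hv.
  have hh : gt (x.2 * Q`_k0.+1) (mu x + M) by apply: gt_mul hq (hall _).
  have := strict_add (mulf_neq0 p0 hk0) (eq_ind_r (fun t => gt _ t) hh vv).
  case/andP => h1 /eqP h2.
  exists k0.+1; split.
  + by rewrite coef_lin.
  + by rewrite coef_lin /= h2.
  + move=> k hk; rewrite coef_lin; apply: gt_add.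
      case: eqP => [_|/eqP k00]; first by rewrite /gt eqxx.
      rewrite mulrC addrC; apply: gt_mul (ge_mu1 x); apply: hlt.
      by case: (k) hk k00 => //= n.
    exact: gt_mul hq (hall _).
Qed.

Lemma ginv1 : ginv 1 0.
Proof.
split.
  by move=> k; rewrite coef1; case: (k == 0%N); rewrite /ge ?v1 ?lexx ?eqxx ?orbT.
by exists 0%N; split; rewrite ?coef1 ?v1 ?oner_eq0.
Qed.

Lemma ginv_scale Q M lam : lam != 0 -> ginv Q M -> ginv (lam *: Q) (v lam + M).
Proof.
move=> l0 [hall [k0 [h1 h2 h3]]]; split.
  by move=> k; rewrite coefZ; apply: ge_mul (hall k); rewrite /ge lexx orbT.
exists k0; split; rewrite ?coefZ ?mulf_neq0 ?vM ?h2 //.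
move=> k hk; rewrite coefZ mulrC addrC; apply: gt_mul (h3 _ hk) _.
by rewrite /ge lexx orbT.
Qed.

Lemma gauss (s : seq (L * L)) (lam : L) : lam != 0 -> all nz s ->
  ginv (lam *: \prod_(x <- s) lin x) (v lam + \sum_(x <- s) mu x).
Proof.
move=> l0 hs; apply: ginv_scale => //.
elim: s hs => [|x s IH] /=; first by rewrite big_nil big_nil => _; exact: ginv1.
move=> /andP [hx hs]; rewrite !big_cons; apply: ginv_step => //; exact: IH.
Qed.

Lemma mu_det x y : nz x -> nz y -> det2 x y != 0 -> mu x + mu y <= v (det2 x y).
Proof.
move=> _ _ hd; apply: v_ge => //; rewrite /det2; apply: ge_add.
  by apply: ge_mul; [apply: ge_mu1 | apply: ge_mu2].
by rewrite ge_N mulrC; apply: ge_mul; [apply: ge_mu2 | apply: ge_mu1].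
Qed.

End Val.

Lemma foldr_min_le (s : seq rat) y : y \in s -> foldr Num.min 1 s <= y.
Proof.
elim: s => [|a s IH] //; rewrite inE => /orP[/eqP ->|hy] /=; rewrite ge_min ?lexx //.
by rewrite IH ?orbT.
Qed.

Lemma foldr_min_gt0 (s : seq rat) : all (fun x => 0 < x) s -> 0 < foldr Num.min 1 s.
Proof. by elim: s => [|a s IH] //= /andP[ha hs]; rewrite lt_min ha IH. Qed.

Section Clus.
Variable (L : closedFieldType) (v : L -> rat).
Hypothesis vM : forall {x y : L}, x != 0 -> y != 0 -> v (x * y) = v x + v y.
Hypothesis vA : forall {x y : L}, x != 0 -> y != 0 -> x + y != 0 ->
      Num.min (v x) (v y) <= v (x + y).

Lemma cluster_count (rs : seq L) (r0 : L) (g : nat) :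
  depth_R_eq v rs 0 ->
  (forall (z : L) (d : rat),
     (g.+1 < size (disc_cluster v rs z d))%N -> disc_cluster v rs z d = rs) ->
  (count (fun r => ((r == r0) || ((r0 - r != 0) && (0 < v (r0 - r))))%R) rs <= g + 1)%N.
Proof.
move=> [[r [r' [hr hr' hne hv0]]] _] hcl.
rewrite leqNgt; apply/negP => hc.
pose d := foldr Num.min 1 (map (fun x => v (x - r0)) (filter (fun x => (x != r0) && (0 < v (x - r0))) rs)).
have d0 : 0 < d.
  apply: foldr_min_gt0; apply/allP => w /mapP [x]; rewrite mem_filter.
  by case/andP => /andP [_ h] _ ->.
have efil : disc_cluster v rs r0 d =
    [seq x <- rs | (x == r0) || ((r0 - x != 0) && (0 < v (r0 - x)))].
  apply: eq_in_filter => x hx; rewrite /in_disc.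
  case: (eqVneq x r0) => [//|xn] /=.
  have -> : r0 - x = - (x - r0) by rewrite opprB.
  rewrite oppr_eq0 subr_eq0 xn (vN (@vM)) /=.
  apply/idP/idP => h.
    exact: lt_le_trans d0 h.
  apply: foldr_min_le; apply/mapP; exists x => //.
  by rewrite mem_filter xn h hx.
have := hcl r0 d; rewrite efil size_filter -addn1 => /(_ hc) /all_filterP /allP hall.
have gtr : forall x, x \in rs -> gt v (x - r0) 0.
  move=> x /hall /orP [/eqP ->|/andP [_ h]]; first by rewrite subrr /gt eqxx.
  by rewrite /gt -opprB (vN (@vM)) h orbT.
have : gt v (r - r') 0.
  have -> : r - r' = (r - r0) + - (r' - r0) by rewrite opprB addrA subrK.
  by apply: (gt_add (@vA)); [apply: gtr | rewrite (gt_N (@vM)); apply: gtr].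
by rewrite /gt subr_eq0 (negPf hne) hv0 ltxx.
Qed.

End Clus.

Section Helpers.
Variable L : fieldType.

Definition P0of (rs : seq L) (k : nat) : seq (L * L) :=
  map (fun r => (1, - r)) rs ++ nseq k (0, 1).

Lemma lin_one (r : L) : lin (1, - r) = 'X - r%:P.
Proof. by rewrite /lin /= mulr1 polyCN. Qed.

Lemma lin_inf : lin ((0 : L), (1 : L)) = 1.
Proof. by rewrite /lin /= mulr0 add0r. Qed.

Lemma prod_P0 rs k : \prod_(x <- P0of rs k) lin x = \prod_(r <- rs) ('X - r%:P).
Proof.
rewrite big_cat big_map /=.
have -> : \prod_(x <- nseq k ((0 : L), (1 : L))) lin x = 1.
  by elim: k => [|k IH]; rewrite ?big_nil //= big_cons IH lin_inf mul1r.
by rewrite mulr1; apply: eq_bigr => r _; rewrite lin_one.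
Qed.

Lemma lin_Nact (a b c d r : L) :
  lin (Nact a b c d (1, - r)) = ('X * a%:P + b%:P) - r *: ('X * c%:P + d%:P).
Proof.
rewrite /lin /Nact /= -mul_polyC !(polyCD, polyCM, polyCN) !mulr1.
ring.
Qed.

Lemma lin_Nact_inf (a b c d : L) : lin (Nact a b c d (0, 1)) = 'X * c%:P + d%:P.
Proof. by rewrite /lin /Nact /= !mulr0 !mulr1 !add0r. Qed.

Lemma det2_Nact (a b c d : L) x y :
  det2 (Nact a b c d x) (Nact a b c d y) = (a * d - b * c) * det2 x y.
Proof. rewrite /det2 /Nact /=; ring. Qed.

Lemma nz_Nact (a b c d : L) x : a * d - b * c != 0 -> nz x -> nz (Nact a b c d x).
Proof.
move=> D0; rewrite /nz /Nact /=; apply: contraLR; rewrite negb_or !negbK.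
case/andP => /eqP h1 /eqP h2.
have e1 : (a * d - b * c) * x.1 = d * (a * x.1 + c * x.2) - c * (b * x.1 + d * x.2) by ring.
have e2 : (a * d - b * c) * x.2 = a * (b * x.1 + d * x.2) - b * (a * x.1 + c * x.2) by ring.
rewrite h1 h2 !mulr0 subr0 in e1 e2.
move/eqP: e1; move/eqP: e2; rewrite !mulf_eq0 (negPf D0) /= => -> ->.
by [].
Qed.

Lemma pairwise_of (T : eqType) (R : T -> T -> bool) (s : seq T) :
  uniq s -> {in s &, forall x y, x != y -> R x y} -> pairwise R s.
Proof.
elim: s => [|a s IH] //= /andP [ha us] h.
apply/andP; split.
  apply/allP => y hy; apply: h; rewrite ?inE ?eqxx ?hy ?orbT //.
  by apply: contraNneq ha => ->.
by apply: IH => // x y hx hy; apply: h; rewrite inE ?hx ?hy orbT.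
Qed.

Lemma P0_det rs k x y : x \in P0of rs k -> y \in P0of rs k -> x != y -> det2 x y != 0.
Proof.
rewrite /P0of !mem_cat !mem_nseq.
case/orP => [/mapP [r _ ->]|/andP [_ /eqP ->]];
case/orP => [/mapP [r' _ ->]|/andP [_ /eqP ->]] //=; rewrite /det2 /=.
- move=> hne; rewrite !mul1r opprK addrC subr_eq0.
  by apply: contraNneq hne => ->.
- by rewrite mul1r mul0r subr0 oner_eq0.
- by rewrite mul0r mul1r sub0r oppr_eq0 oner_eq0.
- by rewrite eqxx.
Qed.

Lemma P0_uniq rs k : uniq rs -> (k <= 1)%N -> uniq (P0of rs k).
Proof.
move=> urs hk; rewrite /P0of cat_uniq map_inj_uniq ?urs /=; last first.
  by move=> r r' [] /oppr_inj.
apply/andP; split.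
  apply/hasPn => x; rewrite mem_nseq => /andP [_ /eqP ->].
  by apply/mapP => [[r _ []]] /eqP; rewrite eq_sym oner_eq0.
by case: k hk => [|[|]].
Qed.

Lemma P0_nz rs k : all nz (P0of rs k).
Proof.
apply/allP => x; rewrite /P0of mem_cat mem_nseq.
case/orP => [/mapP [r _ ->]|/andP [_ /eqP ->]]; by rewrite /nz /= oner_eq0 ?orbT.
Qed.

Lemma size_P0 rs k : size (P0of rs k) = (size rs + k)%N.
Proof. by rewrite size_cat size_map size_nseq. Qed.

End Helpers.

Section Clus2.
Variable (L : closedFieldType) (v : L -> rat).
Hypothesis vM : forall x y : L, x != 0 -> y != 0 -> v (x * y) = v x + v y.
Hypothesis vA : forall x y : L, x != 0 -> y != 0 -> x + y != 0 ->
      Num.min (v x) (v y) <= v (x + y).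

Definition Cp (x0 y : L * L) : bool :=
  (y == x0) || ((det2 x0 y != 0) && (0 < v (det2 x0 y))).

Lemma P0_count (rs : seq L) k g x0 : (k <= 1)%N ->
  depth_R_eq v rs 0 ->
  (forall (z : L) (d : rat),
     (g.+1 < size (disc_cluster v rs z d))%N -> disc_cluster v rs z d = rs) ->
  x0 \in P0of rs k -> (count (Cp x0) (P0of rs k) <= g + 1)%N.
Proof.
move=> hk hdep hcl; rewrite /P0of count_cat count_map count_nseq mem_cat mem_nseq.
case/orP => [/mapP [r0 hr0 ->]|/andP [k0 /eqP ->]].
- have -> : Cp (1, - r0) (0, 1) = false.
    rewrite /Cp /det2 /= xpair_eqE eq_sym oner_eq0 /= mul1r mul0r subr0 v1 ?ltxx ?andbF //.
  rewrite mul0n addn0.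
  have := cluster_count vM vA r0 hdep hcl.
  congr (_ <= _)%N; apply: eq_count => r /=.
  rewrite /Cp /det2 /= xpair_eqE eqxx /= eqr_opp !mul1r opprK addrC.
  by [].
- have -> : count (preim (fun r => (1, - r)) (Cp (0, 1))) rs = 0%N.
    apply/eqP; rewrite -leqn0 leqNgt -has_count; apply/hasPn => r _ /=.
    rewrite /Cp /det2 /= xpair_eqE oner_eq0 /= mul0r mul1r sub0r oppr_eq0 oner_eq0 /=.
    by rewrite vN ?v1 ?ltxx.
  have -> : Cp (0, 1) (0, 1) = true by rewrite /Cp eqxx.
  by rewrite add0n mul1n; apply: leq_trans hk _; rewrite leq_addl.
Qed.

End Clus2.


Lemma hom_map (K : fieldType) (L : fieldType) (iota : {rmorphism K -> L}) (N : nat)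
  (f : {poly K}) (a b c d : K) :
  map_poly iota (\sum_(i < N.+1) f`_i *: (('X * a%:P + b%:P) ^+ i * ('X * c%:P + d%:P) ^+ (N - i)))
  = hom N (map_poly iota f) ('X * (iota a)%:P + (iota b)%:P) ('X * (iota c)%:P + (iota d)%:P).
Proof.
rewrite /hom rmorph_sum; apply: eq_bigr => i _.
rewrite /= map_polyZ coef_map; congr (_ *: _).
by rewrite rmorphM /= !rmorphXn /= !rmorphD /= !rmorphM /= map_polyX !map_polyC.
Qed.

Lemma weq_map (K : fieldType) (L : fieldType) (iota : {rmorphism K -> L}) g
  (f : {poly K}) (a b c d e : K) :
  map_poly iota (weq_transform g f a b c d e) =
  iota e ^+ 2 *: hom (2 * g + 2) (map_poly iota f)
     ('X * (iota a)%:P + (iota b)%:P) ('X * (iota c)%:P + (iota d)%:P).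
Proof.
rewrite /weq_transform map_polyZ rmorphXn /=; congr (_ *: _).
rewrite /hom rmorph_sum.
have e3 : (2 * g + 3 = (2 * g + 2).+1)%N by lia.
rewrite e3; apply: eq_bigr => i _.
rewrite /= map_polyZ coef_map; congr (_ *: _).
by rewrite rmorphM /= !rmorphXn /= !rmorphD /= !rmorphM /= map_polyX !map_polyC.
Qed.

Lemma ex_arith g : (2 * (2 * g + 2).-1 = 4 * g + 2)%N.
Proof. lia. Qed.

Lemma nn_arith g : ((2 * g + 2) * (2 * g + 2).-1 = (2 * g + 2) * (2 * g + 1))%N.
Proof. lia. Qed.

Lemma final_arith (g : nat) (W B0 Vd E S : rat) : 0 <= 2 * E + S -> S <= (g + 1)%:R * Vd ->
  W + B0 <= W + ((4 * g + 2)%:R * (2 * E) + (((2 * g + 2) * (2 * g + 1))%:R * Vd + B0)).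
Proof.
rewrite !natrM !natrD /= => h1 h2.
set G := (g%:R : rat).
have key : 0 <= 2 * E + (G + 1) * Vd by lra.
have hG : 0 <= G by rewrite /G ler0n.
have := mulr_ge0 (_ : 0 <= 4 * G + 2) key.
have -> : (4 * G + 2) * (2 * E + (G + 1) * Vd) = (4 * G + 2) * (2 * E) + ((2 * G + 2) * (2 * G + 1)) * Vd by ring.
move=> h; have h' := h (ltac:(lra)).
rewrite -/G; lra.
Qed.

Theorem theorem17p1 (K : fieldType) (L : closedFieldType)
  (iota : {rmorphism K -> L}) (v : L -> rat) (g : nat) (f : {poly K}) (rs : seq L) :
  nonarch_local_field_odd_residue iota v ->
  (2 <= g)%N ->
  separable_poly f ->
  (size f = (2 * g + 2)%N \/ size f = (2 * g + 3)%N) ->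
  intK_poly iota v f ->
  roots_of iota f rs ->
  depth_R_eq v rs 0 ->
  vK iota v (lead_coef f) = 0 ->
  (forall (z : L) (d : rat),
     (g.+1 < size (disc_cluster v rs z d))%N -> disc_cluster v rs z d = rs) ->
  minimal_weq iota v g f.
Proof.
move=> [[vM vA] [_ _ _ _ [two0 v2]]] hg sep hsz intf rootsf hdep vcf hcl.
split => // h rf rh [inth [a [b [c [d [e [det0 e0 eh0]]]]]]] rootsf' rootsh.
rewrite /roots_of in rootsf rootsf' rootsh.
set cf := lead_coef f.
have f0 : f != 0 by rewrite -size_poly_gt0; case: hsz => ->; lia.
have cf0 : cf != 0 by rewrite lead_coef_eq0.
have icf0 : iota cf != 0 by rewrite fmorph_eq0.
have szrs : (size rs).+1 = size f.
  have := congr1 (fun p : {poly L} => size p) rootsf; rewrite size_map_poly size_scale // size_prod_XsubC.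
  by move=> ->.
set k := (2 * g + 3 - size f)%N.
have hk : (k <= 1)%N by rewrite /k; case: hsz => ->; lia.
have hn : (size rs + k = 2 * g + 2)%N by rewrite /k; case: hsz => e1; rewrite e1 in szrs *; lia.
have urs : uniq rs.
  move: sep; rewrite -(separable_map iota) rootsf.
  by rewrite (eqp_separable (eqp_scale _ icf0)) separable_prod_XsubC.
set P0 := P0of rs k.
have hP0nz : all nz P0 := P0_nz rs k.
have hBD0 : BD P0 != 0.
  apply: BD_neq0; apply: pairwise_of (P0_uniq urs hk) _ => x y hx hy.
  by move=> hne; apply: (P0_det hx hy hne).
have eP0 : map_poly iota f = iota cf *: \prod_(x <- P0) lin x by rewrite prod_P0.
have szP0 : size P0 = (2 * g + 2)%N by rewrite size_P0.
have h2P0 : (2 <= size P0)%N by rewrite szP0; lia.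
have eBDf : BD (map (fun s => (1, - s)) rf) = BD P0.
  have := GL rootsf' eP0 icf0 hP0nz hBD0 h2P0.
  by move/(mulfI (expf_neq0 _ icf0)).
have eh : map_poly iota h = (iota e ^+ 2 * iota cf) *:
    \prod_(x <- map (Nact (iota a) (iota b) (iota c) (iota d)) P0) lin x.
  rewrite eh0 weq_map rootsf -/cf -hn hom_prod scalerA; congr (_ *: _).
  rewrite big_map /P0 /P0of big_cat big_map /=; congr (_ * _).
    apply: eq_bigr => r _; apply/esym; exact: lin_Nact.
  elim: (k) => [|j IH]; first by rewrite big_nil expr0.
  by rewrite (_ : nseq j.+1 _ = (0, 1) :: nseq j (0, 1)) // big_cons -IH lin_Nact_inf exprS.
set D := iota a * iota d - iota b * iota c.
have D0 : D != 0.
  by rewrite /D -!rmorphM -rmorphB fmorph_eq0.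
set P := map (Nact (iota a) (iota b) (iota c) (iota d)) P0.
set lam := iota e ^+ 2 * iota cf.
have lam0 : lam != 0 by rewrite mulf_neq0 ?expf_neq0 ?fmorph_eq0.
have hPnz : all nz P.
  by rewrite all_map; apply/allP => x hx /=; apply: nz_Nact => //; move/allP: hP0nz; apply.
have eBDP : BD P = D ^+ (size P0 * (size P0).-1) * BD P0 by rewrite BD_Nact.
have hBDP : BD P != 0 by rewrite eBDP mulf_neq0 ?expf_neq0.
have szP : size P = (2 * g + 2)%N by rewrite size_map.
have h2P : (2 <= size P)%N by rewrite szP leq_addl.
have eBDh := GL rootsh eh lam0 hPnz hBDP h2P.
rewrite szP ex_arith in eBDh.
have h16 : (16 : K) != 0.
  by rewrite (_ : (16 : K) = 2 ^+ 4) ?expf_neq0 // -natrX.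
have i16 : iota (16 ^+ g) != 0 by rewrite fmorph_eq0 expf_neq0.
have edh : weq_disc iota g h rh =
    iota (16 ^+ g) * (lam ^+ (4 * g + 2) * (D ^+ (size P0 * (size P0).-1) * BD P0)).
  by rewrite /weq_disc Dr_BD rmorphM -mulrA [iota (_ ^+ (4 * g + 2))]rmorphXn eBDh eBDP.
have edf : weq_disc iota g f rf = iota (16 ^+ g) * (iota cf ^+ (4 * g + 2) * BD P0).
  by rewrite /weq_disc Dr_BD eBDf rmorphM -mulrA [iota (_ ^+ (4 * g + 2))]rmorphXn.
have vcf' : v (iota cf) = 0 by [].
have vlam : v lam = 2 * v (iota e) by rewrite /lam vM ?expf_neq0 ?fmorph_eq0 // vX ?fmorph_eq0 // vcf' addr0.
have G := gauss vM vA lam0 hPnz.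
rewrite -eh in G.
case: G => _ [k0 [hk0 hv _]].
rewrite coef_map in hk0 hv.
have hk0' : h`_k0 != 0 by apply: contraNneq hk0 => ->; rewrite fmorph_eq0.
have hint := inth k0; rewrite /intK (negPf hk0') /= /vK hv vlam in hint.
have SB : \sum_(x <- P) mu v x <= (g + 1)%:R * v D.
  rewrite big_map; apply: (sum_bound (C := Cp v)) => // x0 hx0; split.
    have := @P0_count L v vM vA rs k g x0 hk hdep hcl hx0. by [].
  move=> y hy; rewrite /Cp negb_or => /andP [hne hnd].
  have dn : det2 x0 y != 0 by apply: (P0_det hx0 hy); rewrite eq_sym.
  rewrite dn /= -leNgt in hnd.
  have nzx : nz x0 by move/allP: hP0nz; apply.
  have nzy : nz y by move/allP: hP0nz; apply.
  have dn' : det2 (Nact (iota a) (iota b) (iota c) (iota d) x0) (Nact (iota a) (iota b) (iota c) (iota d) y) != 0.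
    by rewrite det2_Nact mulf_neq0.
  apply: le_trans (mu_det vM vA (nz_Nact D0 nzx) (nz_Nact D0 nzy) dn') _.
  rewrite det2_Nact vM //; lra.
rewrite edf edh !vM ?mulf_neq0 ?expf_neq0 // !vX ?fmorph_eq0 // vcf' mulr0 add0r vlam szP0 nn_arith.
exact: final_arith hint SB.
Qed.
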